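(* Let $p$ be an odd prime, $q\in\mathbb{C}_p$ with $|q-1|_p<1$, $\alpha\in\mathbb{N}\cup\{0\}$, $h\in\mathbb{N}$, and let $n_1,n_2,k$ be nonnegative integers with $n_1+n_2>2k$. Then \[ \sum_{l=0}^{n_1+n_2-2k}\binom{n_1+n_2-2k}{l}(-1)^l\frac{\widetilde{G}_{l+2k+1,q}^{(\alpha,h)}}{l+2k+1}=\begin{cases}[2]_q+q^{h+1}\dfrac{\widetilde{G}_{n_1+n_2+1,q^{-1}}^{(\alpha,h)}}{n_1+n_2+1} & \text{if } k=0,\\[2mm] \displaystyle\sum_{l=0}^{2k}\binom{2k}{l}(-1)^{2k+l}\Big\{[2]_q+q^{h+1}\frac{\widetilde{G}_{n_1+n_2-l+1,q^{-1}}^{(\alpha,h)}}{n_1+n_2-l+1}\Big\} & \text{if } k\neq 0.\end{cases} \]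
   Context: For $x\in\mathbb{Z}_p$ write $[x]_q=\frac{1-q^x}{1-q}$, and $[2]_q=1+q$. For a uniformly differentiable $f:\mathbb{Z}_p\to\mathbb{C}_p$, the fermionic $p$-adic $q$-integral is $\int_{\mathbb{Z}_p}f(\xi)\,d\mu_{-q}(\xi)=\lim_{N\to\infty}\frac{1}{[p^N]_{-q}}\sum_{\xi=0}^{p^N-1}f(\xi)(-q)^{\xi}$, with $[p^N]_{-q}=\frac{1+q^{p^N}}{1+q}$. The $(h,q)$-Genocchi polynomials with weight $\alpha$ are defined for $n\ge0$, $x\in\mathbb{Z}_p$ by $\frac{\widetilde{G}_{n+1,q}^{(\alpha,h)}(x)}{n+1}=\int_{\mathbb{Z}_p}q^{(h-1)\xi}[x+\xi]_{q^{\alpha}}^n\,d\mu_{-q}(\xi)$, and the numbers are $\widetilde{G}_{n,q}^{(\alpha,h)}=\widetilde{G}_{n,q}^{(\alpha,h)}(0)$. The numbers $\widetilde{G}_{n,q^{-1}}^{(\alpha,h)}$ are obtained by replacing $q$ by $q^{-1}$ everywhere: $\frac{\widetilde{G}_{n+1,q^{-1}}^{(\alpha,h)}}{n+1}=\int_{\mathbb{Z}_p}q^{(1-h)\xi}[\xi]_{q^{-\alpha}}^n\,d\mu_{-q^{-1}}(\xi)$. *)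

(* Defs.v *)
From HB Require Import structures.
From mathcomp Require Import all_boot all_order all_algebra.
From mathcomp Require Import boolp classical_sets reals.
Set Implicit Arguments. Unset Strict Implicit. Unset Printing Implicit Defensive.
Import Order.TTheory GRing.Theory Num.Theory.
Local Open Scope ring_scope.

(* A model of C_p: an algebraically closed field K with an absolute value
   [abs : K -> R] that is non-archimedean, complete, and restricts on the
   integers to the p-adic absolute value |n|_p = p^(-v_p(n)). *)
Record padic_abs (p : nat) (R : realType) (K : closedFieldType)
    (abs : K -> R) : Prop := PadicAbs {
  abs_ge0 : forall x, 0 <= abs x;
  abs0 : abs 0 = 0;
  abs_eq0 : forall x, abs x = 0 -> x = 0;
  absM : forall x y, abs (x * y) = abs x * abs y;
  abs_ultra : forall x y, abs (x + y) <= Num.max (abs x) (abs y);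
  abs_nat : forall n : nat, (0 < n)%N -> abs (n%:R) = (p%:R : R) ^- logn p n;
  abs_complete : forall u : nat -> K,
    (forall eps : R, 0 < eps -> exists N : nat, forall m n : nat,
        (N <= m)%N -> (N <= n)%N -> abs (u m - u n) < eps) ->
    exists L : K, forall eps : R, 0 < eps -> exists N : nat, forall n : nat,
        (N <= n)%N -> abs (u n - L) < eps
}.

Section Defs.
Variables (R : realType) (K : closedFieldType) (abs : K -> R).

Definition abs_cvg (u : nat -> K) (L : K) : Prop :=
  forall eps : R, 0 < eps -> exists N : nat, forall n : nat,
    (N <= n)%N -> abs (u n - L) < eps.

(* the limit (a chosen one if it exists, 0 otherwise) *)
Definition abs_lim (u : nat -> K) : K := xget 0 (abs_cvg u).

(* q-number [n]_a = 1 + a + ... + a^(n-1) = (1 - a^n)/(1 - a) for natural n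
   (and = n when a = 1) *)
Definition qnum (a : K) (n : nat) : K := \sum_(i < n) a ^+ i.

Definition fqint (p : nat) (q : K) (f : nat -> K) : K :=
  abs_lim (fun N => (\sum_(xi < p ^ N) f xi * (- q) ^+ xi) / qnum (- q) (p ^ N)).

(* (h,q)-Genocchi numbers with weight alpha:
   G_{n+1} = (n+1) * int q^{(h-1)xi} [xi]_{q^alpha}^n dmu_{-q}; G_0 unused (:= 0) *)
Definition Gnum (p : nat) (q : K) (alpha h : nat) (n : nat) : K :=
  match n with
  | 0 => 0
  | m.+1 => m.+1%:R *
      fqint p q (fun xi => q ^+ ((h - 1) * xi) * qnum (q ^+ alpha) xi ^+ m)
  end.
End Defs.

(* Main.v *)
Require Import Defs.
From HB Require Import structures.
From mathcomp Require Import all_boot all_order all_algebra.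
From mathcomp Require Import boolp classical_sets reals.
From mathcomp Require Import ring lra zify.
Import Order.TTheory GRing.Theory Num.Theory.
Local Open Scope ring_scope.
Set Implicit Arguments. Unset Strict Implicit. Unset Printing Implicit Defensive.

Section Abs.
Variables (p : nat) (R : realType) (K : closedFieldType) (abs : K -> R).
Hypothesis habs : padic_abs p abs.
Hypothesis hp : prime p.
Hypothesis hodd : odd p.

Lemma a_ge0 x : 0 <= abs x. Proof. exact: (abs_ge0 habs). Qed.
Lemma a_mul x y : abs (x * y) = abs x * abs y. Proof. exact: (absM habs). Qed.
Lemma a_ultra x y : abs (x + y) <= Num.max (abs x) (abs y). Proof. exact: (abs_ultra habs). Qed.
Lemma a_0 : abs 0 = 0. Proof. exact: (abs0 habs). Qed.

Lemma a_1 : abs 1 = 1.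
Proof. have := abs_nat habs (n:=1) isT. by rewrite logn1 expr0 invr1. Qed.

Lemma a_N1 : abs (-1) = 1.
Proof.
have h : abs (-1) * abs (-1) = 1 by rewrite -a_mul mulrNN mulr1 a_1.
have h0 := a_ge0 (-1). nra.
Qed.

Lemma a_N x : abs (- x) = abs x.
Proof. by rewrite -mulN1r a_mul a_N1 mul1r. Qed.

Lemma a_add_le x y c : abs x <= c -> abs y <= c -> abs (x + y) <= c.
Proof. move=> hx hy; apply: le_trans (a_ultra x y) _; by rewrite ge_max hx hy. Qed.

Lemma a_sub_le x y c : abs x <= c -> abs y <= c -> abs (x - y) <= c.
Proof. by move=> hx hy; apply: a_add_le; rewrite // a_N. Qed.

Lemma a_sum_le (I : Type) (r : seq I) (P : pred I) (F : I -> K) c :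
  0 <= c -> (forall i, P i -> abs (F i) <= c) -> abs (\sum_(i <- r | P i) F i) <= c.
Proof.
move=> c0 hF; apply: (big_ind (fun x => abs x <= c)) => //.
- by rewrite a_0.
- by move=> x y hx hy; apply: a_add_le.
Qed.

Lemma a_expr x n : abs (x ^+ n) = abs x ^+ n.
Proof. elim: n => [|n IH]; first by rewrite !expr0 a_1. by rewrite !exprS a_mul IH. Qed.

Lemma a_eq0 x : (abs x == 0) = (x == 0).
Proof.
apply/eqP/eqP => [/(abs_eq0 habs)//|->]; exact: a_0.
Qed.

Lemma a_inv x : abs x^-1 = (abs x)^-1.
Proof.
have [->|x0] := eqVneq x 0; first by rewrite invr0 a_0 invr0.
have h : abs x * abs x^-1 = 1 by rewrite -a_mul mulfV // a_1.
have hx : abs x != 0 by rewrite a_eq0.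
by rewrite -[abs x^-1](mulKf hx) h mulr1.
Qed.

Lemma a_mul_le1 x y : abs x <= 1 -> abs y <= 1 -> abs (x * y) <= 1.
Proof. move=> hx hy; rewrite a_mul; have := a_ge0 x; have := a_ge0 y. nra. Qed.

Lemma a_expr_le1 x n : abs x <= 1 -> abs (x ^+ n) <= 1.
Proof. move=> hx; rewrite a_expr; apply: exprn_ile1 => //; exact: a_ge0. Qed.

Lemma a_nat_le1 n : abs (n%:R) <= 1.
Proof.
case: n => [|n]; first by rewrite a_0.
rewrite (abs_nat habs) //. rewrite -exprVn.
apply: exprn_ile1; first by rewrite invr_ge0 ler0n.
have p1 : (1 < p)%N by apply: prime_gt1.
rewrite invr_le1 ?ler1n ?unitfE ?pnatr_eq0 ?ltr0n //; try lia.
Qed.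

Lemma a_p_lt1 : abs (p%:R) < 1.
Proof.
have p1 : (1 < p)%N by apply: prime_gt1.
rewrite (abs_nat habs); last lia.
rewrite (lognE p p) hp /= dvdnn (ltnW p1) divnn (ltnW p1) /= logn1 expr1.
rewrite invf_lt1 ?ltr1n //; by rewrite ltr0n; lia.
Qed.

Lemma a_2 : abs 2 = 1.
Proof.
have p1 : (2 < p)%N.
  have := prime_gt1 hp. case: p hodd => [//|[//|[//|n]]]; lia.
have := (abs_nat habs (n:=2) isT). rewrite lognE.
have -> : (p %| 2)%N = false.
  apply/negbTE/negP => /dvdn_leq h; have := h isT; lia.
by rewrite !andbF expr0 invr1.
Qed.

Lemma a_strict x y : abs y < abs x -> abs (x + y) = abs x.
Proof.
move=> hyx; have := a_ultra (x + y) (- y); rewrite addrK a_N => h2.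
apply/eqP; rewrite eq_le.
move: h2; rewrite le_max => /orP[h2|h2].
- have hm : Num.max (abs x) (abs y) = abs x by apply/max_idPl; exact: ltW.
  by rewrite -{1}hm a_ultra h2.
- by move: (lt_le_trans hyx h2); rewrite ltxx.
Qed.

Lemma qnum0 (x : K) : qnum x 0 = 0. Proof. by rewrite /qnum big_ord0. Qed.
Lemma qnum_S (x : K) n : qnum x n.+1 = 1 + x * qnum x n.
Proof. by rewrite /qnum big_ord_recl expr0 mulr_sumr; congr (_ + _); apply: eq_bigr => i _; rewrite exprS. Qed.
Lemma qnum_Sr (x : K) n : qnum x n.+1 = qnum x n + x ^+ n.
Proof. by rewrite /qnum big_ord_recr. Qed.
Lemma qnum_add (x : K) m n : qnum x (m + n) = qnum x m + x ^+ m * qnum x n.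
Proof.
elim: n => [|n IH]; first by rewrite addn0 qnum0 mulr0 addr0.
by rewrite addnS !qnum_Sr IH mulrDr addrA exprD.
Qed.
Lemma qnum_mul (x : K) m n : qnum x (m * n) = qnum x m * qnum (x ^+ m) n.
Proof.
elim: n => [|n IH]; first by rewrite muln0 !qnum0 mulr0.
by rewrite mulnS addnC qnum_add IH qnum_Sr mulrDr -exprM mulnC; ring.
Qed.
Lemma qnum_geo (x : K) n : (x - 1) * qnum x n = x ^+ n - 1.
Proof.
elim: n => [|n IH]; first by rewrite qnum0 mulr0 expr0 subrr.
rewrite qnum_Sr mulrDr IH exprS; ring.
Qed.
Lemma qnum_inv0 (x : K) c : x != 0 -> x ^+ c * qnum x^-1 c = x * qnum x c.
Proof.
move=> x0; elim: c => [|c IH]; first by rewrite !qnum0 !mulr0.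
rewrite qnum_Sr mulrDr exprS -mulrA IH qnum_S exprVn.
have -> : x * x ^+ c * x ^- c = x by rewrite -mulrA mulfV ?mulr1 // expf_neq0.
ring.
Qed.

Lemma a_qnum_le1 (x : K) n : abs x <= 1 -> abs (qnum x n) <= 1.
Proof. move=> hx; apply: a_sum_le => // i _; exact: a_expr_le1. Qed.

Lemma a_expr_sub1 (x : K) n : abs x <= 1 -> abs (x ^+ n - 1) <= abs (x - 1).
Proof.
move=> hx; rewrite -qnum_geo a_mul.
have := a_qnum_le1 n hx; have := a_ge0 (x - 1); have := a_ge0 (qnum x n); nra.
Qed.

Lemma a_expr_sub1q (x : K) n : abs (x - 1) <= 1 -> abs (x ^+ n - 1) <= abs (qnum x n).
Proof.
move=> hx; rewrite -qnum_geo a_mul.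
have := a_ge0 (x - 1); have := a_ge0 (qnum x n); nra.
Qed.

Lemma a_near1 (x : K) : abs (x - 1) < 1 -> abs x = 1.
Proof.
move=> h; have -> : x = 1 + (x - 1) by ring.
by rewrite a_strict a_1.
Qed.

Lemma a_powlip (x y : K) m : abs x <= 1 -> abs y <= 1 -> abs (x ^+ m - y ^+ m) <= abs (x - y).
Proof.
move=> hx hy; rewrite subrXX a_mul.
have : abs (\sum_(i < m) x ^+ (m.-1 - i) * y ^+ i) <= 1.
  apply: a_sum_le => // i _; apply: a_mul_le1; exact: a_expr_le1.
have := a_ge0 (x - y); have := a_ge0 (\sum_(i < m) x ^+ (m.-1 - i) * y ^+ i); nra.
Qed.

Lemma a_prodlip (x y x' y' : K) c : abs x <= 1 -> abs y' <= 1 ->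
  abs (x - x') <= c -> abs (y - y') <= c -> abs (x * y - x' * y') <= c.
Proof.
move=> hx hy h1 h2.
have -> : x * y - x' * y' = x * (y - y') + (x - x') * y' by ring.
apply: a_add_le; rewrite a_mul.
- have := a_ge0 x; have := a_ge0 (y - y'); nra.
- have := a_ge0 y'; have := a_ge0 (x - x'); nra.
Qed.

End Abs.

Definition vanish (R : realType) (e : nat -> R) :=
  forall eps, 0 < eps -> exists N, forall n, (N <= n)%N -> e n < eps.

Lemma vanish_le (R : realType) (e e' : nat -> R) :
  (forall n, e' n <= e n) -> vanish e -> vanish e'.
Proof.
move=> h he eps /he [N HN]; exists N => n /HN; exact: le_lt_trans.
Qed.

Lemma vanish_max (R : realType) (e e' : nat -> R) :
  vanish e -> vanish e' -> vanish (fun n => Num.max (e n) (e' n)).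
Proof.
move=> he he' eps h; have [N HN] := he eps h; have [N' HN'] := he' eps h.
exists (maxn N N') => n hn; rewrite gt_max HN ?HN' //; lia.
Qed.

Lemma vanish_geo (R : realType) (r : R) : 0 <= r -> r < 1 -> vanish (fun n => r ^+ n).
Proof.
move=> r0 r1 eps he.
have [->|rn0] := eqVneq r 0.
  exists 1%N => n hn; rewrite expr0n; case: n hn => //.
have rp : 0 < r by rewrite lt_neqAle eq_sym rn0.
set s := r^-1 - 1.
have sp : 0 < s by rewrite /s subr_gt0 invf_gt1.
have rs : r * (1 + s) = 1 by rewrite /s addrC subrK mulfV.
have bern : forall n : nat, 1 + n%:R * s <= (1 + s) ^+ n.
  elim=> [|n IH]; first by rewrite mul0r addr0 expr0.
  rewrite exprS -natr1 mulrDl mul1r.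
  have : 0 <= n%:R * s by apply: mulr_ge0 => //; exact: ltW.
  nra.
have x0 : 0 <= (s * eps)^-1 by rewrite invr_ge0; apply: mulr_ge0; exact: ltW.
exists (Num.Def.archi_bound (s * eps)^-1) => n hn.
have hN : (s * eps)^-1 < n%:R.
  apply: lt_le_trans (archi_boundP x0) _; by rewrite ler_nat.
have hN2 : 1 < n%:R * (s * eps).
  have := mulr_gt0 sp he => hse.
  by rewrite -(ltr_pdivrMr _ _ hse) mul1r.
have hrn : r ^+ n * (1 + s) ^+ n = 1 by rewrite -exprMn rs expr1n.
have hb := bern n; have hr0 := exprn_ge0 n r0.
rewrite ltNge; apply/negP => h.
have h1 : eps * (1 + n%:R * s) <= r ^+ n * (1 + s) ^+ n.
  apply: ler_pM => //; [exact: ltW| have := mulr_ge0 (ler0n _ n) (ltW sp); lra].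
rewrite hrn in h1. nra.
Qed.


Section Small.
Variables (p : nat) (R : realType) (K : closedFieldType) (abs : K -> R).
Hypothesis habs : padic_abs p abs.
Hypothesis hp : prime p.
Hypothesis hodd : odd p.

Lemma qnum_small (b : K) : abs (b - 1) < 1 -> vanish (fun n => abs (qnum b (p ^ n))).
Proof.
move=> hb.
set r := Num.max (abs (p%:R : K)) (abs (b - 1)).
have r0 : 0 <= r by rewrite le_max (a_ge0 habs).
have r1 : r < 1 by rewrite gt_max hb (a_p_lt1 habs).
have hb1 : abs b <= 1 by rewrite (a_near1 habs).
apply: (vanish_le _ (vanish_geo r0 r1)) => n.
elim: n => [|n IH].
  by rewrite expn0 expr0 qnum_S qnum0 mulr0 addr0 (a_1 habs).
rewrite expnSr qnum_mul (a_mul habs) exprSr.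
set c := b ^+ (p ^ n).
have hc : abs (qnum c p) <= r.
  have -> : qnum c p = \sum_(i < p) (c ^+ i - 1) + p%:R.
    by rewrite sumrB sumr_const card_ord subrK.
  apply: (a_add_le habs); last by rewrite le_max lexx.
  apply: (a_sum_le habs) => // i _.
  apply: le_trans (a_expr_sub1 habs _ _) _; first by rewrite /c (a_expr habs) exprn_ile1 // (a_ge0 habs).
  apply: le_trans (a_expr_sub1 habs _ hb1) _; by rewrite le_max lexx orbT.
apply: ler_pM => //; exact: (a_ge0 habs).
Qed.
End Small.

Lemma sum_split_mul (K : closedFieldType) (F : nat -> K) N m :
  \sum_(i < m * N) F i = \sum_(j < m) \sum_(x < N) F (j * N + x)%N.
Proof.
elim: m => [|m IH]; first by rewrite mul0n !big_ord0.
rewrite big_ord_recr /= -IH mulSnr big_split_ord /=; done.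
Qed.

Lemma sum_sign (K : closedFieldType) m : \sum_(j < m) (-1 : K) ^+ j = (odd m)%:R.
Proof.
elim: m => [|m IH]; first by rewrite big_ord0.
rewrite big_ord_recr /= IH -signr_odd /=; by case: (odd m); rewrite /= ?expr1 ?expr0; ring.
Qed.

Section Conv.
Variables (p : nat) (R : realType) (K : closedFieldType) (abs : K -> R).
Hypothesis habs : padic_abs p abs.
Hypothesis hp : prime p.
Hypothesis hodd : odd p.

Lemma a_lt_add x y (c : R) : abs x < c -> abs y < c -> abs (x + y) < c.
Proof. move=> hx hy; apply: le_lt_trans (a_ultra habs x y) _; by rewrite gt_max hx hy. Qed.

Lemma odd_pn n : odd (p ^ n).
Proof. by rewrite oddX hodd orbT. Qed.

Lemma D_eq (q0 : K) N : odd N -> (1 + q0) * qnum (- q0) N = 1 + q0 ^+ N.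
Proof.
move=> hN; have := qnum_geo (- q0) N.
rewrite exprNn -signr_odd hN expr1 => h.
have -> : 1 + q0 = - (- q0 - 1) by ring.
rewrite mulNr h; ring.
Qed.

Lemma a_1plus (x : K) : abs (x - 1) < 1 -> abs (1 + x) = 1.
Proof.
move=> h; have -> : 1 + x = 2 + (x - 1) by ring.
by rewrite (a_strict habs) (a_2 habs hp hodd).
Qed.

Lemma D_abs (q0 : K) N : abs (q0 - 1) < 1 -> odd N -> abs (qnum (- q0) N) = 1.
Proof.
move=> hq hN.
have hq1 : abs q0 <= 1 by rewrite (a_near1 habs).
have h1 : abs (1 + q0 ^+ N) = 1.
  apply: a_1plus; apply: le_lt_trans (a_expr_sub1 habs _ hq1) hq.
have := congr1 abs (D_eq q0 hN); rewrite (a_mul habs) a_1plus // h1 mul1r //.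
Qed.

Lemma T_abs (q0 : K) (f : nat -> K) N : abs (q0 - 1) < 1 -> (forall x, abs (f x) <= 1) ->
  abs (\sum_(x < N) f x * (- q0) ^+ x) <= 1.
Proof.
move=> hq hf; apply: (a_sum_le habs) => // i _; apply: (a_mul_le1 habs) => //.
apply: (a_expr_le1 habs); by rewrite (a_N habs) (a_near1 habs).
Qed.

Definition Sq (q0 : K) (f : nat -> K) (n : nat) :=
  (\sum_(xi < p ^ n) f xi * (- q0) ^+ xi) / qnum (- q0) (p ^ n).

Lemma step_B (q0 : K) (f : nat -> K) (d : nat -> R) n :
  abs (q0 - 1) < 1 -> (forall x, abs (f x) <= 1) ->
  (forall j x, abs (f (j * p ^ n + x)%N - f x) <= d n) ->
  abs (Sq q0 f n.+1 - Sq q0 f n) <= Num.max (d n) (abs (qnum q0 (p ^ n))).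
Proof.
move=> hq hf hd.
set e := Num.max _ _.
have hq1 : abs q0 <= 1 by rewrite (a_near1 habs).
have hqq : abs (q0 - 1) <= 1 by exact: ltW.
set N := (p ^ n)%N.
have hN := odd_pn n.
have hM := odd_pn n.+1.
set TN := \sum_(xi < N) f xi * (- q0) ^+ xi.
set TM := \sum_(xi < p ^ n.+1) f xi * (- q0) ^+ xi.
set DN := qnum (- q0) N.
set DM := qnum (- q0) (p ^ n.+1).
have aDN : abs DN = 1 by apply: D_abs.
have aDM : abs DM = 1 by apply: D_abs.
have DN0 : DN != 0 by rewrite -(a_eq0 habs) aDN oner_eq0.
have DM0 : DM != 0 by rewrite -(a_eq0 habs) aDM oner_eq0.
have aTN : abs TN <= 1 by apply: T_abs.
set c := q0 ^+ N.
have hc1 : abs (c - 1) <= e.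
  apply: le_trans (a_expr_sub1q habs _ hqq) _; by rewrite le_max lexx orbT.
have hc : abs c <= 1 by rewrite /c (a_expr habs) exprn_ile1 // (a_ge0 habs).
have hT : abs (TM - TN) <= e.
  have -> : TN = \sum_(j < p) \sum_(x < N) (-1) ^+ j * (f x * (- q0) ^+ x).
    rewrite (eq_bigr (fun j : 'I_p => (-1) ^+ (nat_of_ord j) * TN)); last by move=> j _; rewrite mulr_sumr.
    by rewrite -mulr_suml sum_sign hodd mul1r.
  rewrite /TM expnSr mulnC (sum_split_mul (fun xi => f xi * (- q0) ^+ xi)) -sumrB.
  apply: (a_sum_le habs) => [|j _]; first by rewrite le_max (a_ge0 habs) orbT.
  rewrite -sumrB; apply: (a_sum_le habs) => [|x _]; first by rewrite le_max (a_ge0 habs) orbT.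
  have -> : (- q0) ^+ (j * N + x) = (-1) ^+ j * c ^+ j * (- q0) ^+ x.
    rewrite exprD mulnC exprM. congr (_ * _).
    have -> : (- q0) ^+ N = - c by rewrite exprNn -signr_odd hN expr1 mulN1r.
    exact: exprNn.
  have -> : f (j * N + x)%N * ((-1) ^+ j * c ^+ j * (- q0) ^+ x) - (-1) ^+ j * (f x * (- q0) ^+ x)
     = (-1) ^+ j * (- q0) ^+ x * (f (j * N + x)%N * c ^+ j - f x * 1) by ring.
  rewrite (a_mul habs) (a_mul habs) (a_expr habs) (a_N1 habs) expr1n mul1r (a_expr habs) (a_N habs) (a_near1 habs) // expr1n mul1r.
  apply: (a_prodlip habs) => //; first by rewrite (a_1 habs).
  - by apply: le_trans (hd j x) _; rewrite le_max lexx.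
  - by apply: le_trans (a_expr_sub1 habs _ hc) hc1.
have hD : abs (DM - DN) <= e.
  have h1 : (1 + q0) * (DM - DN) = (q0 ^+ (p ^ n.+1) - 1) - (c - 1).
    by rewrite mulrBr /DM /DN !D_eq // /c; ring.
  have := congr1 abs h1; rewrite (a_mul habs) a_1plus // mul1r => ->.
  apply: (a_sub_le habs) => //.
  rewrite expnSr exprM -/c.
  by apply: le_trans (a_expr_sub1 habs _ hc) hc1.
rewrite /Sq -/N -/TN -/TM -/DN -/DM.
have -> : TM / DM - TN / DN = ((TM - TN) * DN - TN * (DM - DN)) / (DM * DN) by field; rewrite DN0 DM0.
rewrite (a_mul habs) (a_inv habs) (a_mul habs) aDM aDN mulr1 invr1 mulr1.
apply: (a_sub_le habs); rewrite (a_mul habs).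
- by rewrite aDN mulr1.
- have := a_ge0 habs (DM - DN); have := a_ge0 habs TN; nra.
Qed.

Lemma conv_B (q0 : K) (f : nat -> K) (d : nat -> R) :
  abs (q0 - 1) < 1 -> (forall x, abs (f x) <= 1) -> vanish d ->
  (forall n j x, abs (f (j * p ^ n + x)%N - f x) <= d n) ->
  exists L, abs_cvg abs (Sq q0 f) L.
Proof.
move=> hq hf hd hmod.
set e := fun n => Num.max (d n) (abs (qnum q0 (p ^ n))).
have he : vanish e by apply: vanish_max => //; apply: (qnum_small habs).
have hs : forall n, abs (Sq q0 f n.+1 - Sq q0 f n) <= e n.
  by move=> n; apply: step_B.
apply: (abs_complete habs) => eps heps.
have [N HN] := he eps heps.
have key : forall k, abs (Sq q0 f (N + k) - Sq q0 f N) < eps.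
  elim=> [|k IH]; first by rewrite addn0 subrr (a_0 habs).
  have -> : Sq q0 f (N + k.+1) - Sq q0 f N =
    (Sq q0 f (N + k).+1 - Sq q0 f (N + k)) + (Sq q0 f (N + k) - Sq q0 f N)
    by rewrite addnS; ring.
  apply: a_lt_add => //; apply: le_lt_trans (hs _) (HN _ _); exact: leq_addr.
exists N => m n hm hn.
have -> : Sq q0 f m - Sq q0 f n =
   (Sq q0 f (N + (m - N)) - Sq q0 f N) - (Sq q0 f (N + (n - N)) - Sq q0 f N)
   by rewrite !subnKC //; ring.
by apply: a_lt_add; rewrite ?(a_N habs) key.
Qed.

End Conv.

Lemma rev_sum (K : closedFieldType) (q : K) (g : nat -> K) N : q != 0 ->
  (- q) ^+ N.-1 * (\sum_(xi < N) g xi * (- q^-1) ^+ xi)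
  = \sum_(eta < N) g (N - eta.+1)%N * (- q) ^+ eta.
Proof.
move=> q0; rewrite (reindex_inj rev_ord_inj) /= mulr_sumr.
apply: eq_bigr => i _.
have hk : N.-1 = ((N - i.+1) + i)%N by have := ltn_ord i; lia.
rewrite hk exprD -invrN exprVn.
have nq : (- q) ^+ (N - i.+1) != 0 by rewrite expf_neq0 // oppr_eq0.
set u := (- q) ^+ (N - i.+1).
set v := (- q) ^+ i.
have -> : u * v * (g (N - i.+1)%N * u^-1) = g (N - i.+1)%N * v * (u * u^-1) by ring.
by rewrite mulfV // mulr1.
Qed.

Lemma rev_Sq (K : closedFieldType) (q : K) (g : nat -> K) N : q != 0 ->
  (\sum_(xi < N) g xi * (- q^-1) ^+ xi) / qnum (- q^-1) N
  = (\sum_(eta < N) g (N - eta.+1)%N * (- q) ^+ eta) / qnum (- q) N.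
Proof.
move=> q0.
have hD : (- q) ^+ N.-1 * qnum (- q^-1) N = qnum (- q) N.
  have := rev_sum (fun _ => 1) N q0; rewrite /qnum.
  under eq_bigr do rewrite mul1r.
  by under [in RHS]eq_bigr do rewrite mul1r.
rewrite -hD -(rev_sum g N q0).
have nq : (- q) ^+ N.-1 != 0 by rewrite expf_neq0 // oppr_eq0.
by rewrite invfM mulrACA mulfV // mul1r.
Qed.

Section Lim.
Variables (p : nat) (R : realType) (K : closedFieldType) (abs : K -> R).
Hypothesis habs : padic_abs p abs.

Lemma cvg_uniq (u : nat -> K) L1 L2 : abs_cvg abs u L1 -> abs_cvg abs u L2 -> L1 = L2.
Proof.
move=> h1 h2; apply/eqP; rewrite -subr_eq0 -(a_eq0 habs).
have h0 := a_ge0 habs (L1 - L2).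
rewrite eq_le h0 andbT; rewrite leNgt; apply/negP => hpos.
have [N1 H1] := h1 _ hpos; have [N2 H2] := h2 _ hpos.
have e : L1 - L2 = (u (maxn N1 N2) - L2) - (u (maxn N1 N2) - L1) by ring.
have : abs (L1 - L2) < abs (L1 - L2).
  rewrite {1}e; apply: le_lt_trans (a_ultra habs _ _) _.
  rewrite gt_max (a_N habs) H1 ?H2 //; lia.
by rewrite ltxx.
Qed.

Lemma lim_eq (u : nat -> K) L : abs_cvg abs u L -> abs_lim abs u = L.
Proof.
move=> h; apply: (cvg_uniq (u := u)) => //.
rewrite /abs_lim; apply: xgetPex; by exists L.
Qed.

Lemma cvg_add (u v : nat -> K) L M : abs_cvg abs u L -> abs_cvg abs v M ->
  abs_cvg abs (fun n => u n + v n) (L + M).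
Proof.
move=> hu hv eps he; have [N1 H1] := hu _ he; have [N2 H2] := hv _ he.
exists (maxn N1 N2) => n hn.
have -> : u n + v n - (L + M) = (u n - L) + (v n - M) by ring.
apply: le_lt_trans (a_ultra habs _ _) _; rewrite gt_max H1 ?H2 //; lia.
Qed.

Lemma cvg_scale (u : nat -> K) L c : abs c <= 1 -> abs_cvg abs u L ->
  abs_cvg abs (fun n => c * u n) (c * L).
Proof.
move=> hc hu eps he; have [N H] := hu _ he; exists N => n hn.
rewrite -mulrBr (a_mul habs); apply: le_lt_trans (H n hn).
have := a_ge0 habs (u n - L); have := a_ge0 habs c; nra.
Qed.

Lemma cvg_const (c : K) : abs_cvg abs (fun _ => c) c.
Proof. by move=> eps he; exists 0%N => n _; rewrite subrr (a_0 habs). Qed.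

Lemma cvg_sum m (F : nat -> nat -> K) (L : nat -> K) :
  (forall l, (l < m)%N -> abs_cvg abs (F l) (L l)) ->
  abs_cvg abs (fun n => \sum_(l < m) F l n) (\sum_(l < m) L l).
Proof.
elim: m => [|m IH] h.
  under eq_fun do rewrite big_ord0. rewrite big_ord0; exact: cvg_const.
have -> : (fun n => \sum_(l < m.+1) F l n) = (fun n => \sum_(l < m) F l n + F m n).
  by apply: funext => n; rewrite big_ord_recr.
rewrite big_ord_recr; apply: cvg_add; last exact: h.
by apply: IH => l hl; apply: h; lia.
Qed.

Lemma cvg_close (u v : nat -> K) L : abs_cvg abs u L ->
  abs_cvg abs (fun n => u n - v n) 0 -> abs_cvg abs v L.
Proof.
move=> hu hd; have := cvg_add hu (cvg_scale (c := -1) _ hd).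
rewrite (a_N habs) (a_1 habs) => /(_ (lexx _)).
rewrite mulr0 addr0.
by have -> : (fun n => u n + -1 * (u n - v n)) = v by apply: funext => n; ring.
Qed.
End Lim.

Lemma H1 (K : closedFieldType) (q : K) h' k j N : q != 0 -> (k + j)%N = N.+1 ->
  q ^+ h' * (q^-1) ^+ (h' * k) = q ^+ (h' * j) * (q^-1) ^+ (h' * N).
Proof.
move=> q0 hkj.
set w := q ^+ h'.
have w0 : w != 0 by rewrite expf_neq0.
rewrite !exprM !exprVn -/w.
have hj : j = (N.+1 - k)%N by lia.
case: j hkj hj => [|j] hkj hj.
  have -> : k = N.+1 by lia.
  by rewrite expr0 mul1r exprS invfM mulrA mulfV // mul1r.
have -> : N = (k + j)%N by lia.
rewrite exprS exprD invfM; field; by rewrite !expf_neq0.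
Qed.

Lemma H2 (K : closedFieldType) (a : K) k j N : a != 0 -> (k + j)%N = N ->
  a ^+ N * qnum a^-1 k = qnum a N.+1 - qnum a j.+1.
Proof.
move=> a0 <-.
rewrite exprD mulrAC qnum_inv0 //.
have -> : (k + j).+1 = (j.+1 + k)%N by lia.
rewrite qnum_add exprS; ring.
Qed.

Section Refl.
Variables (p : nat) (R : realType) (K : closedFieldType) (abs : K -> R).
Hypothesis habs : padic_abs p abs.
Hypothesis hp : prime p.
Hypothesis hodd : odd p.
Variables (q : K) (alpha h' : nat) (Q : K -> K).
Hypothesis hq : abs (q - 1) < 1.
Hypothesis hQ1 : forall x, abs x <= 1 -> abs (Q x) <= 1.
Hypothesis hQ2 : forall x y, abs x <= 1 -> abs y <= 1 -> abs (Q x - Q y) <= abs (x - y).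

Definition fL xi := q ^+ (h' * xi) * Q (1 - qnum (q ^+ alpha) xi).
Definition fR xi := (q^-1) ^+ (h' * xi) * Q (qnum ((q^-1) ^+ alpha) xi).

Lemma a_inv_sub1 (x : K) : abs x = 1 -> abs (x^-1 - 1) = abs (x - 1).
Proof.
move=> hx; have x0 : x != 0 by rewrite -(a_eq0 habs) hx oner_eq0.
have -> : x^-1 - 1 = x^-1 * (- (x - 1)) by field.
by rewrite (a_mul habs) (a_inv habs) hx invr1 mul1r (a_N habs).
Qed.

Lemma aq1 : abs q = 1. Proof. exact: (a_near1 habs). Qed.
Lemma q_neq0 : q != 0. Proof. by rewrite -(a_eq0 habs) aq1 oner_eq0. Qed.
Lemma aqi : abs q^-1 = 1. Proof. by rewrite (a_inv habs) aq1 invr1. Qed.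
Lemma aqa : abs (q ^+ alpha) = 1. Proof. by rewrite (a_expr habs) aq1 expr1n. Qed.
Lemma qa_neq0 : q ^+ alpha != 0. Proof. by rewrite -(a_eq0 habs) aqa oner_eq0. Qed.
Lemma aqai : abs (q ^+ alpha)^-1 = 1. Proof. by rewrite (a_inv habs) aqa invr1. Qed.
Lemma qa_sub1 : abs (q ^+ alpha - 1) < 1.
Proof. apply: le_lt_trans (a_expr_sub1 habs _ _) hq; by rewrite aq1. Qed.
Lemma qai_sub1 : abs ((q ^+ alpha)^-1 - 1) < 1.
Proof. by rewrite a_inv_sub1 ?aqa ?qa_sub1. Qed.
Lemma qi_sub1 : abs (q^-1 - 1) < 1.
Proof. by rewrite a_inv_sub1 ?aq1. Qed.

Definition dl (N : nat) := Num.max (Num.max (abs (qnum (q ^+ alpha) N))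
   (abs (qnum (q ^+ alpha)^-1 N))) (abs (qnum q^-1 N)).

Lemma refl_fin M : odd M ->
  abs ((\sum_(xi < M.+2) fL xi * (- q) ^+ xi)
       - (1 + q ^+ M.+2) * (Q 1 - q ^+ h'.+1 * Q 0)
       - q ^+ h'.+2 * (\sum_(eta < M.+2) fR (M.+2 - eta.+1)%N * (- q) ^+ eta))
  <= dl M.+2.
Proof.
move=> hM.
have eA : \sum_(xi < M.+2) fL xi * (- q) ^+ xi
   = fL 0 + fL 1 * (- q) + \sum_(i < M) fL i.+2 * (- q) ^+ i.+2.
  by rewrite !big_ord_recl /= expr0 mulr1 expr1 addrA.
have eB : \sum_(eta < M.+2) fR (M.+2 - eta.+1)%N * (- q) ^+ eta
   = \sum_(i < M) fR (M.+1 - i)%N * (- q) ^+ i + fR 1 * (- q) ^+ M + fR 0 * (- q) ^+ M.+1.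
  rewrite !big_ord_recr /= subnn.
  have -> : (M.+2 - M.+1)%N = 1%N by lia.
  done.
have fL0 : fL 0 = Q 1 by rewrite /fL muln0 expr0 qnum0 subr0 mul1r.
have fL1 : fL 1 = q ^+ h' * Q 0 by rewrite /fL muln1 qnum_S qnum0 mulr0 addr0 subrr.
have fR0 : fR 0 = Q 0 by rewrite /fR muln0 expr0 qnum0 mul1r.
have fR1 : fR 1 = (q ^+ h')^-1 * Q 1 by rewrite /fR muln1 qnum_S qnum0 mulr0 addr0 exprVn.
have qM : (- q) ^+ M = - q ^+ M by rewrite exprNn -signr_odd hM expr1 mulN1r.
have qM1 : (- q) ^+ M.+1 = q ^+ M.+1 by rewrite exprNn -signr_odd /= hM expr0 mul1r.
have qh0 : q ^+ h' != 0 by rewrite expf_neq0 // q_neq0.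
rewrite eA eB.
set S1 := \sum_(i < M) fL i.+2 * (- q) ^+ i.+2.
set S2 := \sum_(i < M) fR (M.+1 - i)%N * (- q) ^+ i.
have -> : fL 0 + fL 1 * (- q) + S1 - (1 + q ^+ M.+2) * (Q 1 - q ^+ h'.+1 * Q 0) -
    q ^+ h'.+2 * (S2 + fR 1 * (- q) ^+ M + fR 0 * (- q) ^+ M.+1) = S1 - q ^+ h'.+2 * S2.
  rewrite fL0 fL1 fR0 fR1 qM qM1 !exprS; field => //.
have dl0 : 0 <= dl M.+2 by rewrite /dl le_max (a_ge0 habs) orbT.
rewrite /S1 /S2 mulr_sumr -sumrB; apply: (a_sum_le habs) => // i _.
have -> : fL i.+2 * (- q) ^+ i.+2 - q ^+ h'.+2 * (fR (M.+1 - i) * (- q) ^+ i)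
   = (- q) ^+ i * (q * q) * (fL i.+2 - q ^+ h' * fR (M.+1 - i)) by rewrite !exprS; ring.
rewrite !(a_mul habs) (a_expr habs) (a_N habs) aq1 expr1n !mul1r.
set k := (M.+1 - i)%N.
have hk : (k + i.+2)%N = M.+3 by rewrite /k; have := ltn_ord i; lia.
rewrite /fL /fR mulrA (H1 h' q_neq0 hk).
set a := q ^+ alpha.
set X := 1 - qnum a i.+2.
set Y := qnum ((q^-1) ^+ alpha) k.
set beta := (q^-1) ^+ (h' * M.+2).
have -> : q ^+ (h' * i.+2) * Q X - q ^+ (h' * i.+2) * beta * Q Y
   = q ^+ (h' * i.+2) * (1 * Q X - beta * Q Y) by ring.
rewrite (a_mul habs) (a_expr habs) aq1 expr1n mul1r.
have aX : abs X <= 1.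
  apply: (a_sub_le habs); first by rewrite (a_1 habs).
  by apply: (a_qnum_le1 habs); rewrite aqa.
have hY : Y = qnum a^-1 k by rewrite /Y exprVn.
have aY : abs Y <= 1 by rewrite hY; apply: (a_qnum_le1 habs); rewrite aqai.
apply: (a_prodlip habs); first by rewrite (a_1 habs).
- exact: hQ1.
-
  rewrite -(a_N habs) opprB /beta mulnC exprM.
  apply: le_trans (a_expr_sub1 habs _ _) _.
    by rewrite (a_expr habs) aqi expr1n.
  apply: le_trans (a_expr_sub1q habs _ _) _; first exact: ltW qi_sub1.
  by rewrite /dl le_max lexx orbT.
- apply: le_trans (hQ2 aX aY) _.
  have a0 : a != 0 by exact: qa_neq0.
  have hk2 : (k + i.+1)%N = M.+2 by rewrite /k; have := ltn_ord i; lia.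
  set c := (a^-1) ^+ M.+2.
  set T := qnum a M.+3.
  have eY : Y = c * (T - qnum a i.+2).
    by rewrite hY -(H2 a0 hk2) mulrA /c exprVn mulVf ?mul1r // expf_neq0.
  have -> : X - Y = (1 - T) + (1 - c) * (T - qnum a i.+2) by rewrite eY /X; ring.
  apply: (a_add_le habs).
    rewrite /T qnum_S.
    have -> : 1 - (1 + a * qnum a M.+2) = - (a * qnum a M.+2) by ring.
    rewrite (a_N habs) (a_mul habs) aqa mul1r.
    by rewrite /dl le_max le_max lexx.
  rewrite (a_mul habs).
  have hT : abs (T - qnum a i.+2) <= 1.
    by apply: (a_sub_le habs); apply: (a_qnum_le1 habs); rewrite aqa.
  have h1c : abs (1 - c) <= dl M.+2.
    rewrite -(a_N habs) opprB.
    apply: le_trans (a_expr_sub1q habs _ _) _; first exact: ltW qai_sub1.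
    by rewrite /dl le_max le_max lexx orbT.
  have := a_ge0 habs (1 - c); have := a_ge0 habs (T - qnum a i.+2); nra.
Qed.

Lemma refl_cvg : abs_cvg abs (fun n => Sq p q fL n
   - (1 + q) * (Q 1 - q ^+ h'.+1 * Q 0) - q ^+ h'.+2 * Sq p q^-1 fR n) 0.
Proof.
have hv : vanish (fun n => dl (p ^ n)%N).
  apply: vanish_max; first apply: vanish_max.
  - exact: (qnum_small habs hp hodd qa_sub1).
  - exact: (qnum_small habs hp hodd qai_sub1).
  - exact: (qnum_small habs hp hodd qi_sub1).
have hb : forall n, (0 < n)%N -> abs (Sq p q fL n
   - (1 + q) * (Q 1 - q ^+ h'.+1 * Q 0) - q ^+ h'.+2 * Sq p q^-1 fR n) <= dl (p ^ n)%N.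
  move=> n n0.
  have hN := odd_pn hodd n.
  have p3 : (2 < p)%N.
    have := prime_gt1 hp. case: (p) hodd => [//|[//|[//|m]]]; lia.
  have [M hM] : exists M, (p ^ n)%N = M.+2.
    exists (p ^ n - 2)%N; have : (p <= p ^ n)%N.
      by rewrite -{1}(expn1 p) leq_exp2l //; lia.
    lia.
  rewrite /Sq (rev_Sq _ _ q_neq0) hM.
  have hN2 : odd M.+2 by rewrite -hM.
  have hMo : odd M by move: hN2; rewrite /= negbK.
  have hD := D_eq q hN2.
  have aD : abs (qnum (- q) M.+2) = 1 by apply: (D_abs habs hp hodd hq).
  have D0 : qnum (- q) M.+2 != 0 by rewrite -(a_eq0 habs) aD oner_eq0.
  set A := \sum_(xi < M.+2) fL xi * (- q) ^+ xi.
  set B := \sum_(eta < M.+2) fR (M.+2 - eta.+1)%N * (- q) ^+ eta.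
  set D := qnum (- q) M.+2.
  set c := Q 1 - q ^+ h'.+1 * Q 0.
  have -> : A / D - (1 + q) * c - q ^+ h'.+2 * (B / D)
      = (A - (1 + q ^+ M.+2) * c - q ^+ h'.+2 * B) / D.
    by rewrite -hD -/D; field.
  rewrite (a_mul habs) (a_inv habs) aD invr1 mulr1 -hM.
  have := refl_fin hMo; by rewrite hM.
move=> eps he; have [N0 HN0] := hv eps he.
exists (maxn N0 1) => n hn; rewrite subr0.
apply: le_lt_trans (hb n _) (HN0 n _); lia.
Qed.
End Refl.

Lemma binom_sub (K : closedFieldType) (x : K) m :
  (1 - x) ^+ m = \sum_(l < m.+1) 'C(m, l)%:R * (-1) ^+ l * x ^+ l.
Proof.
rewrite exprDn; apply: eq_bigr => i _.
by rewrite expr1n mul1r (exprNn x) -mulr_natl mulrA.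
Qed.

Section Final.
Variables (p : nat) (R : realType) (K : closedFieldType) (abs : K -> R).
Hypothesis habs : padic_abs p abs.
Hypothesis hp : prime p.
Hypothesis hodd : odd p.

Definition gpow (q0 : K) alpha h' j := fun xi : nat => q0 ^+ (h' * xi) * qnum (q0 ^+ alpha) xi ^+ j.

Lemma conv_pow (q0 : K) alpha h' j : abs (q0 - 1) < 1 ->
  exists L, abs_cvg abs (Sq p q0 (gpow q0 alpha h' j)) L.
Proof.
move=> hq.
have aq : abs q0 = 1 by apply: (a_near1 habs).
set a := q0 ^+ alpha.
have aa : abs a = 1 by rewrite (a_expr habs) aq expr1n.
have ha : abs (a - 1) < 1 by apply: le_lt_trans (a_expr_sub1 habs _ _) hq; rewrite aq.
have hqq : abs (q0 - 1) <= 1 by exact: ltW.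
have haa : abs (a - 1) <= 1 by exact: ltW.
set d := fun n => Num.max (abs (qnum q0 (p ^ n))) (abs (qnum a (p ^ n))).
apply: (conv_B habs hp hodd (d := d)) => //.
- move=> x; apply: (a_mul_le1 habs); first by rewrite (a_expr habs) aq expr1n.
  by apply: (a_expr_le1 habs); apply: (a_qnum_le1 habs); rewrite aa.
- by apply: vanish_max; apply: (qnum_small habs hp hodd).
move=> n jj x; rewrite /gpow.
set N := (p ^ n)%N.
have hN1 : abs (q0 ^+ N - 1) <= d n.
  apply: le_trans (a_expr_sub1q habs _ hqq) _; by rewrite /d le_max lexx.
have hNa : abs (a ^+ N - 1) <= d n.
  apply: le_trans (a_expr_sub1q habs _ haa) _; by rewrite /d le_max lexx orbT.
have hqa : abs (qnum a N) <= d n by rewrite /d le_max lexx orbT.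
apply: (a_prodlip habs).
- by rewrite (a_expr habs) aq expr1n.
- by apply: (a_expr_le1 habs); apply: (a_qnum_le1 habs); rewrite aa.
- rewrite mulnDr exprD.
  have -> : q0 ^+ (h' * (jj * N)) * q0 ^+ (h' * x) - q0 ^+ (h' * x)
     = q0 ^+ (h' * x) * ((q0 ^+ N) ^+ (h' * jj) - 1).
    have -> : q0 ^+ (h' * (jj * N)) = (q0 ^+ N) ^+ (h' * jj).
      by rewrite -exprM; congr (_ ^+ _); lia.
    ring.
  rewrite (a_mul habs) (a_expr habs) aq expr1n mul1r.
  apply: le_trans (a_expr_sub1 habs _ _) hN1.
  by rewrite (a_expr habs) aq expr1n.
- apply: le_trans (a_powlip habs _ _ _) _.
  + by apply: (a_qnum_le1 habs); rewrite aa.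
  + by apply: (a_qnum_le1 habs); rewrite aa.
  rewrite qnum_add.
  have -> : qnum a (jj * N) + a ^+ (jj * N) * qnum a x - qnum a x
     = qnum a (jj * N) + (a ^+ (jj * N) - 1) * qnum a x by ring.
  apply: (a_add_le habs).
  + rewrite mulnC qnum_mul (a_mul habs).
    have := a_qnum_le1 habs jj (_ : abs (a ^+ N) <= 1).
    rewrite (a_expr habs) aa expr1n => /(_ (lexx _)) h1.
    have := a_ge0 habs (qnum a N); have := a_ge0 habs (qnum (a ^+ N) jj); nra.
  + rewrite (a_mul habs).
    have h1 : abs (qnum a x) <= 1 by apply: (a_qnum_le1 habs); rewrite aa.
    have h2 : abs (a ^+ (jj * N) - 1) <= d n.
      rewrite mulnC exprM; apply: le_trans (a_expr_sub1 habs _ _) hNa.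
      by rewrite (a_expr habs) aa expr1n.
    have := a_ge0 habs (qnum a x); have := a_ge0 habs (a ^+ (jj * N) - 1); nra.
Qed.
Lemma natr_neq0 m : (m.+1)%:R != 0 :> K.
Proof.
apply/negP => /eqP h0.
have := abs_nat habs (n := m.+1) isT; rewrite h0 (a_0 habs) => /esym /eqP.
rewrite invr_eq0 expf_eq0 pnatr_eq0 andbC.
by have := prime_gt0 hp; case: (p).
Qed.

Lemma Gnum_eq (q0 : K) alpha h' m :
  Gnum abs p q0 alpha h'.+1 m.+1 / (m.+1)%:R = abs_lim abs (Sq p q0 (gpow q0 alpha h' m)).
Proof.
rewrite /Gnum /fqint /Sq /gpow subn1 /= mulrC mulKf //; exact: natr_neq0.
Qed.

Lemma Sq_lin (q0 : K) m (c : nat -> K) (g : nat -> nat -> K) n :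
  Sq p q0 (fun xi => \sum_(l < m) c l * g l xi) n = \sum_(l < m) c l * Sq p q0 (g l) n.
Proof.
rewrite /Sq.
under eq_bigr do rewrite mulr_suml.
rewrite exchange_big mulr_suml; apply: eq_bigr => l _.
rewrite mulrA mulr_sumr; congr (_ * _); apply: eq_bigr => i _; by rewrite mulrA.
Qed.

Lemma lim_of (q0 : K) alpha h' j : abs (q0 - 1) < 1 ->
  abs_cvg abs (Sq p q0 (gpow q0 alpha h' j)) (abs_lim abs (Sq p q0 (gpow q0 alpha h' j))).
Proof.
move=> hq; have [L hL] := conv_pow alpha h' j hq; by rewrite (lim_eq habs hL).
Qed.
End Final.

Lemma binom_sub2 (K : closedFieldType) (z : K) m :
  (z - 1) ^+ m = \sum_(i < m.+1) 'C(m, i)%:R * (-1) ^+ i * z ^+ (m - i).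
Proof.
rewrite exprDn; apply: eq_bigr => i _.
by rewrite -mulr_natl; ring.
Qed.

Unset Implicit Arguments.

Theorem mainTheorem7 (p : nat) (R : realType) (K : closedFieldType) (abs : K -> R)
  (hp : prime p) (hodd : odd p) (habs : padic_abs p abs)
  (q : K) (hq : abs (q - 1) < 1) (alpha h : nat) (hh : (0 < h)%N)
  (n1 n2 k : nat) (hk : (2 * k < n1 + n2)%N) :
  \sum_(l < (n1 + n2 - 2 * k).+1)
     ('C(n1 + n2 - 2 * k, l)%:R * (-1) ^+ l *
      (Gnum abs p q alpha h (l + 2 * k + 1) / (l + 2 * k + 1)%:R))
  = if k == 0%N then
      (1 + q) + q ^+ (h + 1) *
        (Gnum abs p q^-1 alpha h (n1 + n2 + 1) / (n1 + n2 + 1)%:R)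
    else
      \sum_(l < (2 * k).+1)
        ('C(2 * k, l)%:R * (-1) ^+ (2 * k + l) *
         ((1 + q) + q ^+ (h + 1) *
           (Gnum abs p q^-1 alpha h (n1 + n2 - l + 1) / (n1 + n2 - l + 1)%:R))).
Proof.
case: h hh => [//|h'] _.
have hqi : abs (q^-1 - 1) < 1 by apply: (qi_sub1 habs).
set n := (n1 + n2 - 2 * k)%N.
have hn : (n1 + n2 = n + 2 * k)%N by rewrite /n; lia.
have n0 : (0 < n)%N by rewrite /n; lia.
set Qf := fun y : K => (1 - y) ^+ (2 * k) * y ^+ n.
have hQ1 : forall x, abs x <= 1 -> abs (Qf x) <= 1.
  move=> x hx; apply: (a_mul_le1 habs); apply: (a_expr_le1 habs) => //.
  by apply: (a_sub_le habs) => //; rewrite (a_1 habs).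
have hQ2 : forall x y, abs x <= 1 -> abs y <= 1 -> abs (Qf x - Qf y) <= abs (x - y).
  move=> x y hx hy.
  have h1x : abs (1 - x) <= 1 by apply: (a_sub_le habs) => //; rewrite (a_1 habs).
  have h1y : abs (1 - y) <= 1 by apply: (a_sub_le habs) => //; rewrite (a_1 habs).
  apply: (a_prodlip habs).
  - exact: (a_expr_le1 habs).
  - exact: (a_expr_le1 habs).
  - apply: le_trans (a_powlip habs _ h1x h1y) _.
    by rewrite -(a_N habs) opprB; have -> : 1 - y - (1 - x) = x - y by ring.
  - exact: (a_powlip habs).
have hrefl := refl_cvg habs hp hodd alpha h' hq hQ1 hQ2.
have Qf0 : Qf 0 = 0 by rewrite /Qf expr0n eqn0Ngt n0 /= mulr0.
have absc : forall m l, abs ('C(m, l)%:R * (-1) ^+ l : K) <= 1.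
  move=> m l; apply: (a_mul_le1 habs); first exact: (a_nat_le1 habs).
  by rewrite (a_expr habs) (a_N1 habs) expr1n.
have absq : forall m, abs (q ^+ m) <= 1.
  by move=> m; rewrite (a_expr habs) (a_near1 habs) // expr1n.
under eq_bigr => l _ do rewrite addn1 (Gnum_eq habs hp).
set LHS := \sum_(l < n.+1) _.
have hA : abs_cvg abs (Sq p q (fL q alpha h' Qf)) LHS.
  have -> : Sq p q (fL q alpha h' Qf) = fun n' => \sum_(l < n.+1)
      ('C(n, l)%:R * (-1) ^+ l) * Sq p q (gpow q alpha h' (l + 2 * k)) n'.
    apply: funext => n'.
    rewrite -(Sq_lin p q n.+1 (fun l => 'C(n, l)%:R * (-1) ^+ l) (fun l => gpow q alpha h' (l + 2 * k))).
    congr Sq; apply: funext => xi.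
    rewrite /fL /gpow /Qf.
    set t := qnum (q ^+ alpha) xi.
    have -> : 1 - (1 - t) = t by ring.
    rewrite (binom_sub t n) !mulr_sumr; apply: eq_bigr => l _.
    rewrite exprD; ring.
  apply: (cvg_sum habs (F := fun l n' => ('C(n, l)%:R * (-1) ^+ l) * Sq p q (gpow q alpha h' (l + 2 * k)) n')
    (L := fun l => ('C(n, l)%:R * (-1) ^+ l) * abs_lim abs (Sq p q (gpow q alpha h' (l + 2 * k))))) => l _.
  apply: (cvg_scale habs) => //; exact: (lim_of habs hp hodd).
set W := fun n' => (1 + q) * (Qf 1 - q ^+ h'.+1 * Qf 0) + q ^+ h'.+2 * Sq p q^-1 (fR q alpha h' Qf) n'.
have hW : abs_cvg abs W LHS.
  apply: (cvg_close habs hA).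
  have -> : (fun n' => Sq p q (fL q alpha h' Qf) n' - W n') =
    (fun n' => Sq p q (fL q alpha h' Qf) n'
   - (1 + q) * (Qf 1 - q ^+ h'.+1 * Qf 0) - q ^+ h'.+2 * Sq p q^-1 (fR q alpha h' Qf) n').
    by apply: funext => n'; rewrite /W; ring.
  exact: hrefl.
have absc2 : forall m l j, abs ('C(m, l)%:R * (-1) ^+ j : K) <= 1.
  move=> m l j; apply: (a_mul_le1 habs); first exact: (a_nat_le1 habs).
  by rewrite (a_expr habs) (a_N1 habs) expr1n.
have sgn2k : forall l, (-1) ^+ (2 * k + l) = (-1) ^+ l :> K.
  by move=> l; rewrite exprD exprM sqrrN !expr1n mul1r.
case: eqP => hk0.
- rewrite !addn1 (Gnum_eq habs hp).
  apply: (cvg_uniq habs hW).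
  have -> : W = fun n' => (1 + q) + q ^+ h'.+2 * Sq p q^-1 (gpow q^-1 alpha h' (n1 + n2)) n'.
    apply: funext => n'; rewrite /W Qf0 mulr0 subr0.
    have -> : Qf 1 = 1 by rewrite /Qf hk0 muln0 expr0 expr1n mul1r.
    rewrite mulr1; congr (_ + _ * Sq _ _ _ _); apply: funext => xi.
    by rewrite /fR /gpow /Qf hk0 muln0 expr0 mul1r hn hk0 muln0 addn0.
  apply: (cvg_add habs (u := fun _ => 1 + q)); first exact: (cvg_const habs).
  apply: (cvg_scale habs) => //; exact: (lim_of habs hp hodd).
- under eq_bigr => l _ do rewrite !addn1 (Gnum_eq habs hp).
  apply: (cvg_uniq habs hW).
  have -> : W = fun n' => \sum_(l < (2 * k).+1) ('C(2 * k, l)%:R * (-1) ^+ (2 * k + l)) *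
      ((1 + q) + q ^+ h'.+2 * Sq p q^-1 (gpow q^-1 alpha h' (n1 + n2 - l)) n').
    apply: funext => n'.
    rewrite /W Qf0 mulr0 subr0.
    have -> : Qf 1 = 0.
      rewrite /Qf subrr expr0n muln_eq0 /=.
      by move/eqP/negbTE: hk0 => ->; rewrite mul0r.
    rewrite mulr0 add0r.
    under eq_bigr do rewrite mulrDr.
    rewrite big_split /= -mulr_suml.
    have hs : \sum_(l < (2 * k).+1) ('C(2 * k, l)%:R * (-1) ^+ (2 * k + l)) = 0 :> K.
      have := binom_sub (1 : K) (2 * k).
      rewrite subrr expr0n muln_eq0 /=.
      move/eqP/negbTE: hk0 => -> h0.
      apply: (etrans _ (esym h0)).
      by apply: eq_bigr => l _; rewrite sgn2k expr1n mulr1.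
    rewrite hs mul0r add0r.
    under eq_bigr do rewrite mulrCA.
    rewrite -mulr_sumr; congr (_ * _).
    rewrite -(Sq_lin p q^-1 (2 * k).+1 (fun l => 'C(2 * k, l)%:R * (-1) ^+ (2 * k + l))
       (fun l => gpow q^-1 alpha h' (n1 + n2 - l))).
    congr Sq; apply: funext => xi.
    rewrite /fR /gpow /Qf.
    set t := qnum (q^-1 ^+ alpha) xi.
    have e2 : (1 - t) ^+ (2 * k) = (t - 1) ^+ (2 * k) by rewrite !exprM -sqrrN opprB.
    rewrite e2 binom_sub2 mulr_suml mulr_sumr; apply: eq_bigr => l _.
    rewrite sgn2k.
    have -> : t ^+ (n1 + n2 - l) = t ^+ (2 * k - l) * t ^+ n.
      by rewrite -exprD; congr (_ ^+ _); have := ltn_ord l; lia.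
    ring.
  apply: (cvg_sum habs (F := fun l n' => ('C(2 * k, l)%:R * (-1) ^+ (2 * k + l)) *
      ((1 + q) + q ^+ h'.+2 * Sq p q^-1 (gpow q^-1 alpha h' (n1 + n2 - l)) n'))
    (L := fun l => ('C(2 * k, l)%:R * (-1) ^+ (2 * k + l)) *
      ((1 + q) + q ^+ h'.+2 * abs_lim abs (Sq p q^-1 (gpow q^-1 alpha h' (n1 + n2 - l)))))) => l _.
  apply: (cvg_scale habs) => //.
  apply: (cvg_add habs (u := fun _ => 1 + q)); first exact: (cvg_const habs).
  apply: (cvg_scale habs) => //; exact: (lim_of habs hp hodd).
Qed.
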